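(* Let $n\ge3$. If $W\in G^{\mathbb{R}}(2,\mathbb{C}^n)$ is not a complex line, then the orbit $\mathrm{U}(n)\cdot W$ has the transitivity property.
   Context: $G^{\mathbb{R}}(2,\mathbb{C}^n)$ is the Grassmannian of real $2$-planes in $\mathbb{C}^n=\mathbb{R}^{2n}$. A set $\mathbb{G}$ of real planes has the transitivity property if for any two vectors $x,y\in\mathbb{C}^n$ there exist $W_1,\dots,W_k\in\mathbb{G}$ with $x\in W_1$, $y\in W_k$ and $\dim_{\mathbb{R}}(W_i\cap W_{i+1})>0$ for $i=1,\dots,k-1$. *)

(* Defs.v *)
From HB Require Import structures.
From mathcomp Require Import all_boot all_order all_algebra.
From mathcomp Require Import reals complex.
Set Implicit Arguments. Unset Strict Implicit. Unset Printing Implicit Defensive.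
Import Order.TTheory GRing.Theory Num.Theory.
Local Open Scope ring_scope.
Local Open Scope complex_scope.

Section Defs.
Variables (R : realType) (n : nat).

Definition cvset := 'cV[R[i]]_n -> Prop.

Definition rspan2 (u v : 'cV[R[i]]_n) : cvset :=
  fun x => exists a b : R, x = a%:C *: u + b%:C *: v.

Definition r_indep (u v : 'cV[R[i]]_n) : Prop :=
  forall a b : R, a%:C *: u + b%:C *: v = 0 -> a = 0 /\ b = 0.

Definition real_2plane (W : cvset) : Prop :=
  exists u v, r_indep u v /\ forall x, W x <-> rspan2 u v x.

Definition complex_line (W : cvset) : Prop :=
  exists u : 'cV[R[i]]_n, u != 0 /\ forall x, W x <-> exists c : R[i], x = c *: u.

Definition unitary (A : 'M[R[i]]_n) : Prop :=
  A *m (map_mx (@conjc R) A)^T = 1%:M.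

Definition mx_image (A : 'M[R[i]]_n) (W : cvset) : cvset :=
  fun x => exists w, W w /\ x = A *m w.

Definition Un_orbit (W : cvset) : cvset -> Prop :=
  fun P => exists A, unitary A /\ forall x, P x <-> mx_image A W x.

(* transitivity property of a set G of real planes: W_0, ..., W_k in G with
   x in W_0, y in W_k and dim_R (W_i cap W_{i+1}) > 0, i.e. the intersection
   contains a nonzero vector *)
Definition transitivity_property (G : cvset -> Prop) : Prop :=
  forall x y : 'cV[R[i]]_n,
    exists (k : nat) (Ws : nat -> cvset),
      (forall i, (i <= k)%N -> G (Ws i)) /\ Ws 0%N x /\ Ws k y /\
      (forall i, (i < k)%N -> exists z, z != 0 /\ Ws i z /\ Ws i.+1 z).

End Defs.

(* Main.v *)
Require Import Defs.
From HB Require Import structures.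
From mathcomp Require Import all_boot all_order all_algebra.
From mathcomp Require Import reals complex spectral sesquilinear.
From mathcomp Require Import ring lra zify.
Set Implicit Arguments. Unset Strict Implicit. Unset Printing Implicit Defensive.
Import Order.TTheory GRing.Theory Num.Theory.
Local Open Scope ring_scope.
Local Open Scope complex_scope.

Section Aux.
Variables (R : realType) (n : nat).
Local Notation C := R[i].
Local Notation vec := 'cV[R[i]]_n.

Definition dot (a b : vec) : C := \sum_i a i 0 * conjc (b i 0).

Lemma dotDl a b c : dot (a + b) c = dot a c + dot b c.
Proof. by rewrite /dot -big_split; apply: eq_bigr => i _; rewrite mxE mulrDl. Qed.

Lemma dotZl k a b : dot (k *: a) b = k * dot a b.
Proof. by rewrite /dot mulr_sumr; apply: eq_bigr => i _; rewrite mxE mulrA. Qed.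

Lemma dotC a b : dot b a = conjc (dot a b).
Proof.
rewrite /dot rmorph_sum; apply: eq_bigr => i _.
by rewrite rmorphM /= conjcK mulrC.
Qed.

Lemma dotDr a b c : dot a (b + c) = dot a b + dot a c.
Proof. by rewrite dotC dotDl rmorphD /= -!dotC. Qed.

Lemma dotZr k a b : dot a (k *: b) = conjc k * dot a b.
Proof. by rewrite dotC dotZl rmorphM /= -dotC. Qed.

Lemma dotNl a b : dot (- a) b = - dot a b.
Proof. by rewrite -scaleN1r dotZl mulN1r. Qed.

Lemma dotNr a b : dot a (- b) = - dot a b.
Proof. by rewrite -scaleN1r dotZr rmorphN rmorph1 mulN1r. Qed.

Lemma dotBl a b c : dot (a - b) c = dot a c - dot b c.
Proof. by rewrite dotDl dotNl. Qed.

Lemma dotBr a b c : dot a (b - c) = dot a b - dot a c.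
Proof. by rewrite dotDr dotNr. Qed.

Lemma dot0l a : dot 0 a = 0.
Proof. by rewrite -(scale0r 0) dotZl mul0r. Qed.

Lemma dot0r a : dot a 0 = 0.
Proof. by rewrite dotC dot0l rmorph0. Qed.

Lemma dot_ge0 a : 0 <= dot a a.
Proof. by apply: sumr_ge0 => i _; apply: mulcJ_ge0. Qed.

Lemma dot_eq0 a : (dot a a == 0) = (a == 0).
Proof.
apply/idP/idP; last by move/eqP->; rewrite dot0l.
rewrite /dot psumr_eq0; last by move=> i _; apply: mulcJ_ge0.
move=> /allP H; apply/eqP/matrixP => i j; rewrite (ord1 j) mxE.
have := H i (mem_index_enum _); rewrite /= mul_conjC_eq0.
by move/eqP.
Qed.

Local Notation "B ^!" :=
  (orthomx Num.conj (mx_of_hermitian (hermitian1mx _)) B) : matrix_set_scope.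
Local Notation "A '_|_ B" := (A%MS <= B^!)%MS : bool_scope.

Lemma complete_unitary m (V : 'M[C]_(m, n)) : V \is unitarymx ->
  col_mx V (schmidt (row_base V^!%MS)) \is unitarymx.
Proof.
move=> Vu.
apply/unitarymxP; rewrite tr_col_mx map_row_mx mul_col_row.
rewrite !(unitarymxP _) ?schmidt_unitarymx ?rank_leq_col //.
move=> [:nsV]; rewrite !(orthomx1P _) -?scalar_mx_block //;
  [abstract: nsV|]; last by rewrite orthomx_sym.
by rewrite eqmx_schmidt_free ?eq_row_base ?row_base_free // orthomx_sym.
Qed.

Lemma cast_unitary p q k (E : p = q) (M : 'M[C]_(p, k)) :
  M \is unitarymx -> castmx (E, erefl k) M \is unitarymx.
Proof. by case: q / E. Qed.


Definition adj (M : 'M[C]_n) := (map_mx conjc M)^T.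

Lemma complete2 (e1 e2 : vec) (i0 i1 : 'I_n) : val i0 = 0%N -> val i1 = 1%N ->
  dot e1 e1 = 1 -> dot e2 e2 = 1 -> dot e2 e1 = 0 ->
  exists M : 'M[C]_n, M \is unitarymx /\ col i0 (adj M) = e1 /\ col i1 (adj M) = e2.
Proof.
move=> h0 h1 n1 n2 o12.
pose V : 'M[C]_(2, n) :=
  \matrix_(i, k) conjc ((if val i == 0%N then e1 else e2) k 0).
have Vu : V \is unitarymx.
  apply/unitarymxP/matrixP => i j; rewrite !mxE.
  have -> : \sum_j0 V i j0 * (V ^t*)%sesqui j0 j =
     dot (if val j == 0%N then e1 else e2) (if val i == 0%N then e1 else e2).
    rewrite /dot; apply: eq_bigr => k _; rewrite !mxE conjCK mulrC //.
  case: i => [[|[|//]] ?]; case: j => [[|[|//]] ?] /=.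
  - by rewrite n1.
  - by rewrite o12.
  - by rewrite dotC o12 /= oppr0.
  - by rewrite n2.
have r2 : \rank V = 2%N by rewrite mxrank_unitary.
have E : (2 + \rank V^!%MS)%N = n.
  rewrite rank_ortho r2 subnKC //.
  by rewrite -r2 rank_leq_col.
pose M := castmx (E, erefl n) (col_mx V (schmidt (row_base V^!%MS))).
exists M; split; first exact/cast_unitary/complete_unitary.
have key (i : 'I_n) (j : 'I_2) : val i = val j -> col i (adj M) =
   (if val j == 0%N then e1 else e2).
  move=> hij; apply/matrixP => k l; rewrite (ord1 l) !mxE castmxE /= cast_ord_id.
  rewrite (_ : cast_ord (esym E) i = lshift _ j); last exact: val_inj.
  by rewrite col_mxEu mxE conjcK.
split.
  by rewrite (key i0 0) //.
by rewrite (key i1 1) //.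
Qed.

Lemma col_mulmx m p q (A : 'M[C]_(m, p)) (B : 'M[C]_(p, q)) i :
  col i (A *m B) = A *m col i B.
Proof. by rewrite !colE mulmxA. Qed.

Lemma adjE (M : 'M[C]_n) : adj M = (M ^t* )%sesqui.
Proof. by rewrite /adj map_trmx. Qed.

Lemma unitaryE (A : 'M[C]_n) : unitary A <-> A \is unitarymx.
Proof. by rewrite /unitary; split; [move=> h; apply/unitarymxP; rewrite -map_trmx | move/unitarymxP; rewrite -map_trmx]. Qed.

Lemma tool2 (e1 e2 a b : vec) : (2 <= n)%N ->
  dot e1 e1 = 1 -> dot e2 e2 = 1 -> dot e2 e1 = 0 ->
  dot a a = 1 -> dot b b = 1 -> dot b a = 0 ->
  exists A, unitary A /\ A *m e1 = a /\ A *m e2 = b.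
Proof.
move=> n2 he1 he2 he12 ha hb hab.
have lt0 : (0 < n)%N by apply: leq_trans n2.
pose i0 := Ordinal lt0; pose i1 := Ordinal n2.
have [Me [Meu [Me1 Me2]]] := @complete2 e1 e2 i0 i1 erefl erefl he1 he2 he12.
have [Ma [Mau [Ma1 Ma2]]] := @complete2 a b i0 i1 erefl erefl ha hb hab.
exists (adj Ma *m Me); split.
  by apply/unitaryE; rewrite mul_unitarymx // adjE trmxC_unitary.
have Mcol (i : 'I_n) (M : 'M[C]_n) : M \is unitarymx ->
    M *m col i (adj M) = col i 1%:M.
  by move=> /unitarymxP Mu; rewrite -col_mulmx adjE Mu.
have Acol (i : 'I_n) (M : 'M[C]_n) : adj M *m col i 1%:M = col i (adj M).
  by rewrite -col_mulmx mulmx1.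
by rewrite -mulmxA -{1}Me1 Mcol // Acol Ma1 -mulmxA -{1}Me2 Mcol // Acol Ma2.
Qed.

Lemma dotE a : dot a a = (complex.Re (dot a a))%:C.
Proof. by rewrite RRe_real // ger0_real // dot_ge0. Qed.

Lemma Re_dot_ge0 a : 0 <= complex.Re (dot a a).
Proof. by rewrite -ler0c -dotE dot_ge0. Qed.

Lemma Re_dot_gt0 a : a != 0 -> 0 < complex.Re (dot a a).
Proof.
move=> a0; rewrite lt_def Re_dot_ge0 andbT; apply: contra a0 => /eqP h.
by rewrite -dot_eq0 dotE h.
Qed.

Definition nrm a := Num.sqrt (complex.Re (dot a a)).
Definition normal a := (nrm a)^-1%:C *: a.

Lemma nrm_gt0 a : a != 0 -> 0 < nrm a.
Proof. by move=> a0; rewrite /nrm sqrtr_gt0 Re_dot_gt0. Qed.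

Lemma nrm_sqr a : nrm a ^+ 2 = complex.Re (dot a a).
Proof. by rewrite /nrm sqr_sqrtr // Re_dot_ge0. Qed.

Lemma normalP a : a != 0 -> dot (normal a) (normal a) = 1.
Proof.
move=> a0; rewrite /normal dotZl dotZr conjc_real dotE -!rmorphM /=.
have h := nrm_gt0 a0; have h2 := nrm_sqr a.
congr (_%:C); rewrite -h2; field; exact: lt0r_neq0.
Qed.

Lemma normalK a : a != 0 -> a = (nrm a)%:C *: normal a.
Proof.
move=> a0; rewrite /normal scalerA -rmorphM /= mulfV ?scale1r //.
exact: lt0r_neq0 (nrm_gt0 a0).
Qed.

Lemma normal_neq0 a : a != 0 -> normal a != 0.
Proof.
move=> a0; apply/negP => /eqP h; move: (normalP a0); rewrite h dot0l => /eqP.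
by rewrite eq_sym oner_eq0.
Qed.

Lemma perp2 (a b : vec) : (3 <= n)%N ->
  exists z, dot z z = 1 /\ dot z a = 0 /\ dot z b = 0.
Proof.
move=> n3.
pose B : 'M[C]_(n, 2) := \matrix_(k, j) conjc ((if val j == 0%N then a else b) k 0).
have rk : (0 < \rank (kermx B))%N.
  rewrite mxrank_ker; have := rank_leq_col B; move: n3.
  by move: (\rank B) => r; lia.
have : kermx B != 0 by rewrite -mxrank_eq0 -lt0n.
have KB := mulmx_ker B.
move: (kermx B) KB => K KB K0.
have /existsP [i ri] : [exists i, row i K != 0].
  apply: contraNT K0; rewrite negb_exists => /forallP h.
  apply/eqP/row_matrixP => i; rewrite row0; apply/eqP.
  by have := h i; rewrite negbK.
pose z := (row i K)^T.
have zB (j : 'I_2) : dot z (if val j == 0%N then a else b) = 0.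
  have := congr1 (fun M : 'M[C]_(1,2) => M 0 j) (congr1 (row i) KB).
  rewrite row_mul row0 !mxE => <-.
  by apply: eq_bigr => k _; rewrite !mxE.
have z0 : z != 0 by rewrite trmx_eq0.
exists (normal z); split; first exact: normalP.
by rewrite /normal !dotZl (zB 0) (zB 1) !mulr0.
Qed.

Lemma conjci : conjc ('i : C) = - 'i.
Proof. by apply/eqP; rewrite eq_complex /= oppr0 !eqxx. Qed.

Lemma conjc_iR (k : R) : conjc ('i * k%:C) = - ('i * k%:C).
Proof. by apply/eqP; rewrite eq_complex /=; apply/andP; split; apply/eqP; ring. Qed.

Lemma iRiR (k : R) : ('i * k%:C) * ('i * k%:C) = - (k ^+ 2)%:C.
Proof. by apply/eqP; rewrite eq_complex /=; apply/andP; split; apply/eqP; ring. Qed.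

Lemma gen_orth (k : R) (p q : vec) : dot p p = 1 -> dot q q = 1 ->
  dot q p = 'i * k%:C ->
  dot (q - ('i * k%:C) *: p) (q - ('i * k%:C) *: p) = (1 - k ^+ 2)%:C /\
  dot (q - ('i * k%:C) *: p) p = 0.
Proof.
move=> hp hq hqp; have hpq : dot p q = - ('i * k%:C) by rewrite dotC hqp conjc_iR.
rewrite !(dotBl, dotBr, dotZl, dotZr) hp hq hqp hpq conjc_iR.
split; last by rewrite mulr1 subrr.
rewrite rmorphB /= rmorph1 -(iRiR k); ring.
Qed.

End Aux.

Ltac cplx := apply/eqP; rewrite eq_complex /=; apply/andP; split; apply/eqP.

Section Links.
Variables (R : realType) (n : nat) (W : cvset R n).
Local Notation vec := 'cV[R[i]]_n.

Definition Link (x y : vec) : Prop :=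
  exists (k : nat) (Ws : nat -> cvset R n),
    (forall i, (i <= k)%N -> Un_orbit W (Ws i)) /\ Ws 0%N x /\ Ws k y /\
    (forall i, (i < k)%N -> exists z, z != 0 /\ Ws i z /\ Ws i.+1 z).

Lemma link_plane A p q : unitary A -> W p -> W q -> Link (A *m p) (A *m q).
Proof.
move=> uA Wp Wq; exists 0%N, (fun _ => mx_image A W); split.
  by move=> i _; exists A; split.
split; first by exists p.
split; first by exists q.
by [].
Qed.

Lemma link_trans x y z : Link x y -> Link y z -> y != 0 -> Link x z.
Proof.
move=> [k1 [W1 [o1 [x1 [y1 l1]]]]] [k2 [W2 [o2 [y2 [z2 l2]]]]] y0.
exists (k1 + k2.+1)%N, (fun i => if (i <= k1)%N then W1 i else W2 (i - k1.+1)%N).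
split.
  move=> i hi; case: ifP => h; first exact: o1.
  by apply: o2; lia.
split; first by rewrite leq0n.
split.
  rewrite (_ : (k1 + k2.+1 <= k1)%N = false); last by lia.
  by rewrite (_ : (k1 + k2.+1 - k1.+1)%N = k2) //; lia.
move=> i hi; case: (ltngtP i k1) => h.
- exact: l1.
- have [t [t0 [za zb]]] := l2 (i - k1.+1)%N ltac:(lia).
  exists t; split => //; split => //.
  by rewrite (_ : (i.+1 - k1.+1 = (i - k1.+1).+1)%N) //; lia.
- subst i; rewrite ?leqnn ?ltnn ?subnn /=; by exists y.
Qed.

Lemma orbit_scale P (r : R) x : (forall w, W w -> W (r%:C *: w)) ->
  Un_orbit W P -> P x -> P (r%:C *: x).
Proof.
move=> Ws [A [uA hP]] /hP [w [Ww ->]]; apply/hP.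
by exists (r%:C *: w); split; [apply: Ws | rewrite scalemxAr].
Qed.

Lemma link_scale x y (r s : R) : (forall r w, W w -> W (r%:C *: w)) ->
  Link x y -> Link (r%:C *: x) (s%:C *: y).
Proof.
move=> Ws [k [Ws' [o [hx [hy l]]]]]; exists k, Ws'; split => //.
split; first by apply: orbit_scale; [exact: Ws | exact: o | exact: hx].
split; first by apply: orbit_scale; [exact: Ws | exact: o | exact: hy].
by [].
Qed.

End Links.

Lemma cl_lemma (R : realType) (n : nat) (W : cvset R n) (u v e : 'cV[R[i]]_n)
  (nu dr di : R) : e != 0 -> nu != 0 -> di != 0 ->
  (forall x, W x <-> rspan2 u v x) -> u = nu%:C *: e ->
  v = (dr%:C + 'i * di%:C) *: e -> complex_line W.
Proof.
move=> e0 nu0 di0 HW uE vE; rewrite uE vE in HW; exists e; split => // x; split.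
  move=> /HW [a [b ->]]; exists (a%:C * nu%:C + b%:C * (dr%:C + 'i * di%:C)).
  by rewrite !scalerA scalerDl.
move=> [c ->]; apply/HW.
pose b := complex.Im c / di.
exists ((complex.Re c - b * dr) / nu), b.
rewrite !scalerA -scalerDl; congr (_ *: _).
rewrite /b; cplx.
- by field; rewrite di0 nu0.
- by field; rewrite di0 nu0.
Qed.

Section Main.
Variables (R : realType) (n : nat) (W : cvset R n) (u v : 'cV[R[i]]_n).
Local Notation vec := 'cV[R[i]]_n.
Hypothesis Hind : r_indep u v.
Hypothesis HW : forall x, W x <-> rspan2 u v x.
Hypothesis Hnc : ~ complex_line W.
Hypothesis n3 : (3 <= n)%N.

Lemma W_comb (a b : R) : W (a%:C *: u + b%:C *: v).
Proof. by apply/HW; exists a, b. Qed.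

Lemma W_scale (r : R) w : W w -> W (r%:C *: w).
Proof.
move=> /HW [a [b ->]]; apply/HW; exists (r * a), (r * b).
by rewrite scalerDr !scalerA !rmorphM.
Qed.

Lemma W_add w w' : W w -> W w' -> W (w + w').
Proof.
move=> /HW [a [b ->]] /HW [a' [b' ->]]; apply/HW; exists (a + a'), (b + b').
by rewrite !rmorphD !scalerDl; rewrite addrACA.
Qed.

Lemma Wu : W u. Proof. by have := W_comb 1 0; rewrite rmorph0 rmorph1 scale1r scale0r addr0. Qed.
Lemma Wv : W v. Proof. by have := W_comb 0 1; rewrite rmorph0 rmorph1 scale1r scale0r add0r. Qed.

Lemma u_neq0 : u != 0.
Proof.
apply/negP => /eqP u0; have := @Hind 1 0; rewrite u0 scaler0 rmorph0 scale0r addr0.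
by case=> // /eqP; rewrite oner_eq0.
Qed.

Definition e1 := normal u.
Definition gam := dot v e1.
Definition v' := v - (complex.Re gam)%:C *: e1.
Definition f := normal v'.
Definition kap := (nrm v')^-1 * complex.Im gam.

Lemma We1 : W e1. Proof. exact: W_scale Wu. Qed.
Lemma e1_unit : dot e1 e1 = 1. Proof. exact: normalP u_neq0. Qed.

Lemma v'_neq0 : v' != 0.
Proof.
apply/negP => /eqP h.
have := @Hind (- (complex.Re gam * (nrm u)^-1)) 1.
rewrite rmorph1 scale1r rmorphN rmorphM /= scaleNr -scalerA.
rewrite -[_ *: u]/(e1) addrC.
by move: h; rewrite /v' => ->; case=> // _ /eqP; rewrite oner_eq0.
Qed.

Lemma v'E : v' = v + (- complex.Re gam)%:C *: e1.
Proof. by rewrite /v' rmorphN scaleNr. Qed.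

Lemma Wf : W f.
Proof. by apply: W_scale; rewrite v'E; apply: W_add; [exact: Wv | exact: W_scale We1]. Qed.

Lemma f_unit : dot f f = 1. Proof. exact: normalP v'_neq0. Qed.

Lemma f_e1 : dot f e1 = 'i * kap%:C.
Proof.
rewrite /f /normal dotZl /v' dotBl dotZl e1_unit -/gam -/v' /kap.
rewrite (_ : gam - (complex.Re gam)%:C * 1 = 'i * (complex.Im gam)%:C).
  by rewrite rmorphM mulrCA.
by rewrite mulr1 {1}[gam]complexE addrAC subrr add0r.
Qed.

Lemma e1_neq0 : e1 != 0.
Proof. by apply/negP => /eqP h; move: e1_unit; rewrite h dot0l => /eqP; rewrite eq_sym oner_eq0. Qed.

Lemma kap_lt1 : kap ^+ 2 < 1.
Proof.
have [hg hg2] := gen_orth e1_unit f_unit f_e1.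
set g := f - _ in hg hg2.
have : 0 <= 1 - kap ^+ 2 by rewrite -ler0c -hg dot_ge0.
rewrite le_eqVlt => /orP [/eqP h|]; last by rewrite subr_gt0.
exfalso; apply: Hnc.
have g0 : g = 0 by apply/eqP; rewrite -dot_eq0 hg -h.
have fE : f = ('i * kap%:C) *: e1 by apply/eqP; rewrite -subr_eq0 -/g g0.
have k0 : kap != 0 by apply/negP => /eqP k0; move: h; rewrite k0 expr0n /= subr0 => /eqP; rewrite eq_sym oner_eq0.
have nu0 : nrm u != 0 by apply: lt0r_neq0; apply: nrm_gt0 u_neq0.
have nv0 : nrm v' != 0 by apply: lt0r_neq0; apply: nrm_gt0 v'_neq0.
have uE : u = (nrm u)%:C *: e1 by apply: normalK u_neq0.
pose d := (nrm v')%:C * ('i * kap%:C) + (complex.Re gam)%:C.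
have vE : v = d *: e1.
  have := normalK v'_neq0; rewrite -/f fE scalerA /v' => h2.
  rewrite -/v' in h2; by rewrite /d scalerDl -h2 /v' subrK.
apply: (@cl_lemma _ _ W u v e1 (nrm u) (complex.Re gam) (nrm v' * kap)) => //.
- exact: e1_neq0.
- by apply: mulf_neq0.
- by rewrite vE /d; congr (_ *: _); cplx; ring.
Qed.

Definition rho := Num.sqrt (1 - kap ^+ 2).
Lemma rho_gt0 : 0 < rho.
Proof. by rewrite /rho sqrtr_gt0 subr_gt0 kap_lt1. Qed.
Lemma rho_sqr : rho ^+ 2 = 1 - kap ^+ 2.
Proof. by rewrite /rho sqr_sqrtr // subr_ge0 ltW // kap_lt1. Qed.

Definition hh (p q : vec) := (rho^-1)%:C *: (q - ('i * kap%:C) *: p).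

Lemma hhP p q : dot p p = 1 -> dot q q = 1 -> dot q p = 'i * kap%:C ->
  dot (hh p q) (hh p q) = 1 /\ dot (hh p q) p = 0.
Proof.
move=> hp hq hqp; have [g1 g2] := gen_orth hp hq hqp.
rewrite /hh !dotZl dotZr g2 mulr0 conjc_real g1; split => //.
rewrite -!rmorphM /= -rho_sqr; congr (_%:C); field; rewrite ?r0' //.
exact: lt0r_neq0 rho_gt0.
Qed.

Lemma hhK p q : q = ('i * kap%:C) *: p + rho%:C *: hh p q.
Proof.
rewrite /hh scalerA -rmorphM mulfV ?scale1r; last exact: lt0r_neq0 rho_gt0.
by rewrite addrC subrK.
Qed.

Lemma mapK (A : 'M[R[i]]_n) p q a w : A *m p = a -> A *m hh p q = hh a w ->
  A *m q = w.
Proof.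
move=> H1 H2; rewrite (hhK p q) (hhK a w) -H2 -H1.
by rewrite mulmxDr !scalemxAr.
Qed.

Lemma edge (a w : vec) : dot a a = 1 -> dot w w = 1 -> dot w a = 'i * kap%:C ->
  exists A, unitary A /\ A *m e1 = a /\ A *m f = w.
Proof.
move=> ha hw hwa.
have [h1 h1o] := hhP e1_unit f_unit f_e1.
have [h2 h2o] := hhP ha hw hwa.
have n2 : (2 <= n)%N by apply: ltnW.
have [A [uA [Ae1 Ah]]] := tool2 n2 e1_unit h1 h1o ha h2 h2o.
exists A; split => //; split => //.
exact: (mapK Ae1 Ah).
Qed.

Lemma link_edge (a w : vec) : dot a a = 1 -> dot w w = 1 ->
  dot w a = 'i * kap%:C -> Link W a w /\ Link W w a.
Proof.
move=> ha hw hwa; have [A [uA [Ae1 Af]]] := edge ha hw hwa.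
by rewrite -Ae1 -Af; split; apply: link_plane => //; [exact: We1 | exact: Wf | exact: Wf | exact: We1].
Qed.

Definition Q (t : R) := forall a b m : vec, dot a a = 1 -> dot b b = 1 ->
  dot m m = 1 -> dot a m = 0 -> dot b m = 0 ->
  forall c : R, dot b a = c%:C -> t <= c -> Link W a b.

Lemma Q_mono t t' : t <= t' -> Q t -> Q t'.
Proof.
move=> tt' Qt a b m ha hb hm ham hbm c hba hc.
exact: (Qt a b m ha hb hm ham hbm c hba (le_trans tt' hc)).
Qed.

Lemma unit_neq0 (a : vec) : dot a a = 1 -> a != 0.
Proof. by move=> h; apply/negP => /eqP a0; move: h; rewrite a0 dot0l => /eqP; rewrite eq_sym oner_eq0. Qed.

Lemma Q_base : Q (kap ^+ 2).
Proof.
move=> a b m ha hb hm ham hbm c hba hc.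
have k1 := kap_lt1.
have k0 : 0 <= kap ^+ 2 by apply: sqr_ge0.
have c1 : 0 < 1 + c by lra.
have c1' : 1 + c != 0 by apply: lt0r_neq0.
pose s0 := kap / (1 + c).
have hnu : 0 <= 1 - 2 * kap ^+ 2 / (1 + c).
  rewrite subr_ge0 ler_pdivrMr //; lra.
pose nu := Num.sqrt (1 - 2 * kap ^+ 2 / (1 + c)).
have nu2 : nu ^+ 2 = 1 - 2 * kap ^+ 2 / (1 + c) by rewrite sqr_sqrtr.
have hma : dot m a = 0 by rewrite dotC ham rmorph0.
have hmb : dot m b = 0 by rewrite dotC hbm rmorph0.
have hab : dot a b = c%:C by rewrite dotC hba conjc_real.
pose w := ('i * s0%:C) *: (a + b) + nu%:C *: m.
have wa : dot w a = 'i * kap%:C.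
  rewrite /w dotDl !dotZl dotDl ha hba hma mulr0 addr0 /s0.
  cplx; field; rewrite ?c1' //.
have wb : dot w b = 'i * kap%:C.
  rewrite /w dotDl !dotZl dotDl hb hab hmb mulr0 addr0 /s0.
  cplx; field; rewrite ?c1' //.
have ww : dot w w = 1.
  rewrite /w !(dotDl, dotDr, dotZl, dotZr) ha hb hab hba ham hbm hma hmb hm.
  rewrite !(mulr0, addr0, add0r, mulr1) conjc_real conjc_iR.
  rewrite -rmorphM /= -expr2 nu2 /s0; cplx; field; rewrite ?c1' //.
have [Law _] := link_edge ha ww wa.
have [_ Lwb] := link_edge hb ww wb.
exact: (link_trans Law Lwb (unit_neq0 ww)).
Qed.

Lemma Q_step t : 0 < t -> Q t -> Q (2 * t ^+ 2 - 1).
Proof.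
move=> t0 Qt a b m ha hb hm ham hbm c hba hc.
have c1 : 0 < 1 + c by nra.
have c1' : 1 + c != 0 by apply: lt0r_neq0.
have hab : dot a b = c%:C by rewrite dotC hba conjc_real.
pose r := Num.sqrt (2 + 2 * c).
have r0 : 0 < r by rewrite sqrtr_gt0; lra.
have r0' : r != 0 by apply: lt0r_neq0.
have r2 : r ^+ 2 = 2 + 2 * c by rewrite sqr_sqrtr //; lra.
pose e := (r^-1)%:C *: (a + b).
have ee : dot e e = 1.
  rewrite /e dotZl dotZr !(dotDl, dotDr) ha hb hab hba conjc_real.
  have -> : 1 + c%:C + (c%:C + 1) = (r ^+ 2)%:C by rewrite r2; cplx; ring.
  cplx; [field; rewrite ?r0' // | ring].
have ea : dot e a = ((1 + c) / r)%:C.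
  rewrite /e dotZl dotDl ha hba -rmorphD -rmorphM /=; congr (_%:C); field; rewrite ?r0' //.
have be : dot b e = ((1 + c) / r)%:C.
  rewrite /e dotZr dotDr hb hba conjc_real -rmorphD -rmorphM /=; congr (_%:C); field; rewrite ?r0' //.
have em : dot e m = 0 by rewrite /e dotZl dotDl ham hbm addr0 mulr0.
have td : t <= (1 + c) / r.
  rewrite ler_pdivlMr //; nra.
have Lae := Qt a e m ha ee hm ham em _ ea td.
have Leb := Qt e b m ee hb hm em hbm _ be td.
exact: (link_trans Lae Leb (unit_neq0 ee)).
Qed.

Lemma Q_iter k : Q 0 \/ Q (1 - 2 ^+ k * (1 - kap ^+ 2)).
Proof.
have k1 := kap_lt1.
elim: k => [|k [Q0|IH]].
- right; have -> : 1 - 2 ^+ 0 * (1 - kap ^+ 2) = kap ^+ 2 by rewrite expr0; ring.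
  exact: Q_base.
- by left.
- have X0 : 0 <= 2 ^+ k * (1 - kap ^+ 2) :> R.
    by apply: mulr_ge0; [apply: exprn_ge0 | lra].
  move: IH X0; set X := 2 ^+ k * (1 - kap ^+ 2) => IH X0.
  case: (lerP (1 - X) 0) => hs.
    by left; apply: Q_mono hs IH.
  right; apply: (Q_mono _ (Q_step hs IH)).
  rewrite [2 ^+ k.+1]exprS -mulrA -/X; nra.
Qed.

Lemma Q0 : Q 0.
Proof.
have k1 := kap_lt1.
pose d := 1 - kap ^+ 2.
have d0 : 0 < d by rewrite /d; lra.
have di0 : 0 <= d^-1 by rewrite invr_ge0 ltW.
pose k := Num.Def.archi_bound d^-1.
have hk := archi_boundP di0.
have k2 : (k%:R : R) <= 2 ^+ k.
  by rewrite -natrX ler_nat ltnW // ltn_expl.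
have hdi : d^-1 * d = 1 by rewrite mulVf // lt0r_neq0.
case: (Q_iter k) => // Qk; apply: (Q_mono _ Qk).
rewrite -/d -/k in hk *; move: hk k2; set P := (2 ^+ k : R); set K := (k%:R : R) => hk k2.
nra.
Qed.

Lemma link_orth a b : dot a a = 1 -> dot b b = 1 -> dot b a = 0 -> Link W a b.
Proof.
move=> ha hb hba; have [m [hm [hma hmb]]] := perp2 a b n3.
have ham : dot a m = 0 by rewrite dotC hma rmorph0.
have hbm : dot b m = 0 by rewrite dotC hmb rmorph0.
exact: (Q0 ha hb hm ham hbm (c := 0) hba (lexx 0)).
Qed.

Lemma main_link x y : Link W x y.
Proof.
have rep (z : vec) : exists z1 (r : R), dot z1 z1 = 1 /\ z = r%:C *: z1.
  case: (eqVneq z 0) => [->|z0].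
    by exists e1, 0; rewrite rmorph0 scale0r; split => //; exact: e1_unit.
  by exists (normal z), (nrm z); split; [exact: normalP | exact: normalK].
have [x1 [r [hx1 ->]]] := rep x.
have [y1 [s [hy1 ->]]] := rep y.
have [z [hz [hzx hzy]]] := perp2 x1 y1 n3.
have L1 := link_orth hx1 hz hzx.
have L2 := link_orth hz hy1 (etrans (dotC _ _) (etrans (congr1 _ hzy) (rmorph0 _))).
apply: link_scale; first by move=> r' w; apply: W_scale.
exact: (link_trans L1 L2 (unit_neq0 hz)).
Qed.

End Main.

Theorem proposition11p7 (R : realType) (n : nat) (W : cvset R n) :
  (3 <= n)%N -> real_2plane W -> ~ complex_line W ->
  transitivity_property (Un_orbit W).
Proof.
move=> n3 [u [v [Hind HW]]] Hnc x y.
exact: (main_link Hind HW Hnc n3 x y).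
Qed.
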